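(* Let $A\in\mathbb{C}^{n\times n}$, and let $\mathcal{H}(A)=\tfrac12(A+A^{*})$ and $\mathcal{S}(A)=\tfrac12(A-A^{*})$. Then \[|\Lambda(A)|\leq \min\Big\{\big(\operatorname{rank}(\mathcal{H}(A))+1\big)\,|\Lambda(\mathcal{S}(A))|,\ \big(\operatorname{rank}(\mathcal{S}(A))+1\big)\,|\Lambda(\mathcal{H}(A))|\Big\}-d(A).\]
   Context: For $M\in\mathbb{C}^{n\times n}$, $\Lambda(M)$ denotes the set of distinct eigenvalues of $M$ and $|\cdot|$ the cardinality of a set; $A^{*}$ is the conjugate transpose. For $\lambda\in\Lambda(M)$, $m_a(M,\lambda)$ is its algebraic multiplicity and $m_g(M,\lambda)$ its geometric multiplicity. The defectivity of $M$ is $d(M):=\sum_{\lambda\in\Lambda(M)}\big(m_a(M,\lambda)-m_g(M,\lambda)\big)$. *)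

(* Defs.v *)
(* complex matrices over R[i] (complex R, from mathcomp-real-closed)
   with R : realType (a complete archimedean ordered field, i.e. the reals). *)
From HB Require Import structures.
From mathcomp Require Import all_boot all_order all_algebra.
From mathcomp Require Import complex.
From mathcomp Require Import finmap boolp classical_sets cardinality reals.
Set Implicit Arguments. Unset Strict Implicit. Unset Printing Implicit Defensive.
Import Order.TTheory GRing.Theory Num.Theory.
Local Open Scope ring_scope.


Section Defs.
Variable C : numClosedFieldType.

Definition ctrmx n (A : 'M[C]_n) : 'M[C]_n := (map_mx Num.conj A)^T.

Definition herm_part n (A : 'M[C]_n) : 'M[C]_n := 2^-1 *: (A + ctrmx A).
Definition skew_part n (A : 'M[C]_n) : 'M[C]_n := 2^-1 *: (A - ctrmx A).

Definition spec n (M : 'M[C]_n) : set C := [set a | eigenvalue M a].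

Definition nspec n (M : 'M[C]_n) : nat := (#|` fset_set (spec M)|)%fset.

Definition alg_mult n (M : 'M[C]_n) (a : C) : nat := mup a (char_poly M).

Definition geo_mult n (M : 'M[C]_n) (a : C) : nat := \rank (eigenspace M a).

Definition defectivity n (M : 'M[C]_n) : nat :=
  (\sum_(a <- fset_set (spec M)) (alg_mult M a - geo_mult M a))%N.
End Defs.

(* Main.v *)
Require Import Defs.
From HB Require Import structures.
From mathcomp Require Import all_boot all_order all_algebra.
From mathcomp Require Import complex.
From mathcomp Require Import finmap boolp classical_sets cardinality reals.
From mathcomp Require Import mxred sesquilinear spectral.
Import Order.TTheory GRing.Theory Num.Theory.
Local Open Scope ring_scope.
Set Implicit Arguments. Unset Strict Implicit. Unset Printing Implicit Defensive.

Section Trig.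
Variable F : fieldType.

Lemma rank_leftU n m (U : 'M[F]_n) (X : 'M[F]_(n, m)) :
  U \in unitmx -> \rank (U *m X) = \rank X.
Proof.
move=> Uu; rewrite -mxrank_tr trmx_mul mxrankMfree ?mxrank_tr //.
by rewrite row_free_unit unitmx_tr.
Qed.

Lemma trig_rank n (M : 'M[F]_n) : is_trig_mx M ->
  (\sum_(i < n) (M i i != 0%R) <= \rank M)%N.
Proof.
elim: n M => [|n IH] M Mt; first by rewrite big_ord0.
rewrite big_ord_recl /=.
have ur0 : ursubmx (M : 'M_(1 + n, 1 + n)) = 0 by apply: ursubmx_trig.
have M't : is_trig_mx (drsubmx (M : 'M_(1 + n, 1 + n))) by apply: drsubmx_trig.
have -> : \sum_(i < n) nat_of_bool (M (lift ord0 i) (lift ord0 i) != 0%R) =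
          \sum_(i < n) nat_of_bool (drsubmx (M : 'M_(1 + n, 1 + n)) i i != 0%R).
  apply: eq_bigr => i _; rewrite mxE.
  rewrite mxE; have -> : rshift 1 i = lift ord0 i by apply: val_inj.
  by [].
have := IH _ M't; set M' := drsubmx _ => leM'.
set c := ulsubmx (M : 'M_(1 + n, 1 + n)); set r := dlsubmx (M : 'M_(1 + n, 1 + n)).
have Mb : (M : 'M_(1 + n, 1 + n)) = block_mx c 0 r M' by rewrite -ur0 submxK.
have c00 : c 0 0 = M ord0 ord0.
  by rewrite !mxE; have -> : lshift n (0 : 'I_1) = ord0 by apply: val_inj.

have [Mz|Mnz] := eqVneq (M ord0 ord0) 0.
  rewrite add0n (leq_trans leM') //.
  have -> : M' = row_mx (0 : 'M_(n, 1)) (1%:M : 'M_n) *m (M : 'M_(1 + n, 1 + n))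
       *m col_mx (0 : 'M_(1, n)) (1%:M : 'M_n).
    by rewrite Mb mul_row_block mul_row_col !mul0mx !mul1mx !add0r mulmx0 mulmx1 add0r.
  by rewrite (leq_trans (mxrankM_maxl _ _)) // mxrankM_maxr.
have cu : c \in unitmx by rewrite unitmxE det_mx11 c00 unitfE.
rewrite add1n.
have -> : (M : 'M_(1 + n, 1 + n)) =
   block_mx 1%:M 0 (r *m invmx c) 1%:M *m block_mx c 0 0 M'.
  by rewrite Mb mulmx_block !mulmx0 !mul0mx !mul1mx !addr0 !add0r mulmxKV.
rewrite rank_leftU; last first. by rewrite unitmxE (@det_lblock F 1 n) !det1 mulr1 unitr1.
by rewrite (@rank_diag_block_mx F 1 1 n n) mxrank_unit // add1n ltnS.
Qed.


Lemma mup_prod n (d : 'I_n -> F) a :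
  mup a (\prod_(i < n) ('X - (d i)%:P)) = (\sum_(i < n) (d i == a))%N.
Proof.
suff : (\prod_(i < n) ('X - (d i)%:P) != 0) &&
   (mup a (\prod_(i < n) ('X - (d i)%:P)) == \sum_(i < n) (d i == a))%N.
  by case/andP => _ /eqP.
apply: (big_ind2 (fun p k => (p != 0) && (mup a p == k))).
- rewrite oner_eq0 /= mupNroot //; by rewrite /root hornerC oner_eq0.
- move=> p1 k1 p2 k2 /andP[p1n /eqP<-] /andP[p2n /eqP<-].
  by rewrite mulf_neq0 //= mupM.
- move=> i _; rewrite polyXsubC_eq0 /=.
  by have := mup_XsubCX 1 a (d i); rewrite expr1 => ->; case: (d i == a).
Qed.

Lemma conj_scalar n (P : 'M[F]_n) (x : F) : P \in unitmx ->
  P *m x%:M *m invmx P = x%:M.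
Proof. by move=> Pu; rewrite mul_mx_scalar -scalemxAl mulmxV // scalemx1. Qed.

Lemma char_poly_conjU n (P A : 'M[F]_n) : P \in unitmx ->
  char_poly (P *m A *m invmx P) = char_poly A.
Proof.
move=> Pu; rewrite /char_poly /char_poly_mx.
have -> : ('X%:M - map_mx polyC (P *m A *m invmx P) : 'M_n) =
   map_mx polyC P *m ('X%:M - map_mx polyC A) *m map_mx polyC (invmx P).
  rewrite mulmxBr mulmxBl -!map_mxM; congr (_ - _).
  rewrite mul_mx_scalar -scalemxAl -map_mxM (mulmxV Pu) map_mx1.
  by rewrite scalemx1.
rewrite !det_mulmx !det_map_mx mulrC mulrA -rmorphM.
by rewrite -det_mulmx (mulVmx Pu) det1 rmorph1 mul1r.
Qed.

Lemma eig_rank_conjU n (P A : 'M[F]_n) a : P \in unitmx ->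
  \rank (eigenspace (P *m A *m invmx P) a) = \rank (eigenspace A a).
Proof.
move=> Pu; rewrite /eigenspace !mxrank_ker; congr (_ - _)%N.
have -> : P *m A *m invmx P - a%:M = P *m (A - a%:M) *m invmx P.
  by rewrite mulmxBr mulmxBl conj_scalar.
by rewrite mxrankMfree ?row_free_unit ?unitmx_inv // rank_leftU.
Qed.

Lemma eig_rank_trig n (T : 'M[F]_n) a : is_trig_mx T ->
  (\rank (eigenspace T a) <= \sum_(i < n) (T i i == a))%N.
Proof.
move=> Tt; rewrite /eigenspace mxrank_ker.
have Tat : is_trig_mx (T - a%:M).
  have /is_trig_mxP Tt' := Tt.
  apply/is_trig_mxP => i j lij; rewrite !mxE Tt' //.
  have -> : (i == j) = false by rewrite -val_eqE /= ltn_eqF.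
  by rewrite mulr0n subr0.
have := trig_rank Tat.
have -> : (\sum_(i < n) ((T - a%:M)%R i i != 0%R))%N = (n - \sum_(i < n) (T i i == a))%N.
  have hs : (\sum_(i < n) 1 = n)%N by rewrite sum1_card card_ord.
  apply/eqP; rewrite -(eqn_add2r (\sum_(i < n) (T i i == a))) subnK; last first.
    apply: (leq_trans (_ : _ <= \sum_(i < n) 1)%N); last by rewrite hs.
    by rewrite leq_sum // => i _; case: (_ == _).
  rewrite -big_split /=; apply/eqP; rewrite -[RHS]hs; apply/eq_bigr => i _.
  by rewrite !mxE eqxx mulr1n subr_eq0; case: (T i i == a).
by move=> h; rewrite leq_subLR addnC -leq_subLR.
Qed.
End Trig.

Lemma sum_eq_uniq (T : eqType) (s : seq T) (x : T) : uniq s ->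
  (\sum_(a <- s) (x == a) <= 1)%N.
Proof.
elim: s => [|b s IH]; first by rewrite big_nil.
rewrite big_cons /= => /andP[bs us].
case: eqP => [->|_]; last by rewrite add0n IH.
rewrite big1_seq // => c /andP[_ cs]; apply/eqP; rewrite eqb0.
by apply: contraNN bs => /eqP->.
Qed.

Section Closed.
Variable C : numClosedFieldType.

Lemma trigonalize n (A : 'M[C]_n) :
  exists2 P : 'M[C]_n, P \in unitmx & is_trig_mx (P *m A *m invmx P).
Proof.
case: n A => [|n] A.
  exists 1%:M; first by rewrite unitmx1.
  by apply/is_trig_mxP => [[]].
have [P Pu Pt] := Schur A (ltn0Sn n).
have Pu' : P \in unitmx by apply: unitarymx_unit.
by exists P => //; rewrite -conjumx.
Qed.

Lemma trig_data n (A : 'M[C]_n) : exists d : 'I_n -> C,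
  (forall a, alg_mult A a = \sum_(i < n) (d i == a))%N /\
  (forall a, \rank (eigenspace A a) <= \sum_(i < n) (d i == a))%N.
Proof.
have [P Pu Pt] := trigonalize A.
exists (fun i => (P *m A *m invmx P) i i); split => a.
  by rewrite /alg_mult -(char_poly_conjU A Pu) char_poly_trig // mup_prod.
by rewrite -(eig_rank_conjU A a Pu) eig_rank_trig.
Qed.

Lemma geo_le_alg n (A : 'M[C]_n) a : (geo_mult A a <= alg_mult A a)%N.
Proof. by have [d [h1 h2]] := trig_data A; rewrite h1 h2. Qed.

Lemma alg_sum n (A : 'M[C]_n) (s : seq C) : uniq s ->
  (\sum_(a <- s) alg_mult A a <= n)%N.
Proof.
move=> us; have [d [h1 _]] := trig_data A.
rewrite (eq_bigr _ (fun a _ => h1 a)) exchange_big /=.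
apply: (leq_trans (_ : _ <= \sum_(i < n) 1)%N); last by rewrite sum1_card card_ord.
by apply: leq_sum => i _; apply: sum_eq_uniq.
Qed.

Lemma spec_finite n (A : 'M[C]_n) : finite_set (spec A).
Proof.
have [d [_ h2]] := trig_data A.
apply: (@sub_finite_set _ _ [set` [seq d i | i <- enum 'I_n]]); last exact: finite_seq.
move=> a /= Aa; apply/mapP.
have : (0 < \sum_(i < n) (d i == a))%N.
  by apply: leq_trans (h2 a); rewrite lt0n mxrank_eq0.
case: (pickP (fun i => d i == a)) => [i /eqP dia|none].
  by exists i; rewrite ?mem_enum.
by rewrite big1 // => i _; rewrite none.
Qed.
End Closed.

From mathcomp Require Import zify.

Lemma sum_sub (T : eqType) (s1 s2 : seq T) (f : T -> nat) : uniq s1 -> uniq s2 ->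
  (forall x, x \in s1 -> (0 < f x)%N -> x \in s2) ->
  (\sum_(x <- s1) f x <= \sum_(x <- s2) f x)%N.
Proof.
move=> u1 u2 h.
have -> : (\sum_(x <- s1) f x = \sum_(x <- [seq x <- s1 | (0 < f x)%N]) f x)%N.
  rewrite big_filter [RHS]big_mkcond /=; apply: eq_bigr => x _.
  by case: ifP => // /negbT; rewrite lt0n negbK => /eqP.
apply: (@uniq_sub_le_big _ addn leq leqnn (fun x y => leq_addr y x) 0%N _ _ _ xpredT f) => //.
  exact: filter_uniq.
by move=> x; rewrite mem_filter => /andP[fx xs]; apply: h.
Qed.

Lemma aux1 (x y z : nat) : (y <= x + z -> y <= x - 1 + z.+1)%N.
Proof. lia. Qed.

Section Main.
Variable C : numClosedFieldType.

Lemma in_specE n (A : 'M[C]_n) a : (a \in fset_set (spec A)) = eigenvalue A a.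
Proof.
rewrite in_fset_set; last exact: spec_finite.
apply/idP/idP => [/set_mem H|h]; first exact: H.
by apply: mem_set.
Qed.

Lemma rank_sum_le n (s : seq C) (E : C -> 'M[C]_n) :
  (\rank (\sum_(r <- s) E r)%MS <= \sum_(r <- s) \rank (E r))%N.
Proof.
elim: s => [|r s IH]; first by rewrite !big_nil mxrank0.
rewrite !big_cons; apply: leq_trans (mxrank_adds_leqif _ _).1 _.
by rewrite leq_add2l.
Qed.

Lemma normal_full n (Q : 'M[C]_n) : Q \is normalmx ->
  (n <= \sum_(r <- fset_set (spec Q)) \rank (eigenspace Q r))%N.
Proof.
move=> /orthomx_spectralP QE.
have Pu := spectral_unit Q.
have dQ : diagonalizable Q.
  exists (spectralmx Q) => //; rewrite /similar_to conjumx //.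
  rewrite [X in _ *m X *m _]QE !mulmxA mulmxV // mul1mx -mulmxA mulmxV // mulmx1.
  exact: diag_mx_is_diag.
have [rs urs rsP] : exists2 rs : seq C, uniq rs &
    (\sum_(r <- rs) eigenspace Q r :=: 1%:M)%MS by apply/diagonalizablePeigen.
have := rank_sum_le rs (eigenspace Q); rewrite rsP mxrank1 => h.
apply: (leq_trans h); apply: sum_sub => //; first exact: fset_uniq.
by move=> x _; rewrite lt0n mxrank_eq0 in_specE.
Qed.

Lemma eig_cap n (A X Q : 'M[C]_n) mu : A = X + Q ->
  (\rank (eigenspace Q mu) <= geo_mult A mu + \rank X)%N.
Proof.
move=> AE.
set W := (eigenspace Q mu :&: kermx X)%MS.
have WA : (W <= eigenspace A mu)%MS.
  apply/eigenspaceP; rewrite AE mulmxDr.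
  have /sub_kermxP -> : (W <= kermx X)%MS by apply: capmxSr.
  have /eigenspaceP -> : (W <= eigenspace Q mu)%MS by apply: capmxSl.
  by rewrite add0r.
have h1 := mxrank_sum_cap (eigenspace Q mu) (kermx X).
have h2 := rank_leq_col (eigenspace Q mu + kermx X)%MS.
have h3 := mxrankS WA.
have h4 := rank_leq_row X.
rewrite mxrank_ker -/W in h1.
rewrite /geo_mult; lia.
Qed.

Lemma key n (A X Q : 'M[C]_n) : A = X + Q -> Q \is normalmx ->
  (nspec A + defectivity A <= (\rank X).+1 * nspec Q)%N.
Proof.
move=> AE Qn.
set L := fset_set (spec A); set K := fset_set (spec Q).
have h1 : (nspec A + defectivity A + \sum_(a <- L) (geo_mult A a - 1)
           = \sum_(a <- L) alg_mult A a)%N.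
  rewrite /nspec /defectivity -/L card_fset_sum1 -!big_split /=.
  apply: eq_big_seq => a aL.
  have := geo_le_alg A a.
  have : (0 < geo_mult A a)%N by rewrite /geo_mult lt0n mxrank_eq0; move: aL; rewrite in_specE.
  by move=> ? ?; rewrite addnAC subnKC // subnKC.
have h2 := alg_sum A (fset_uniq L).
have h3 := normal_full Qn.
have h4 : (\sum_(m <- K) \rank (eigenspace Q m) <=
           \sum_(m <- K) (geo_mult A m - 1) + \sum_(m <- K) (\rank X).+1)%N.
  rewrite -big_split /=; apply: leq_sum => m _.
  have := eig_cap m AE; apply: aux1.
have h5 : (\sum_(m <- K) (geo_mult A m - 1) <= \sum_(m <- L) (geo_mult A m - 1))%N.
  apply: sum_sub; rewrite ?fset_uniq // => m _ hm.
  rewrite in_specE /eigenvalue -mxrank_eq0 -lt0n; rewrite /geo_mult subn_gt0 in hm.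
  exact: ltnW.
have h6 : (\sum_(m <- K) (\rank X).+1 = (\rank X).+1 * nspec Q)%N.
  by rewrite /nspec card_fset_sum1 big_distrr /= muln1.
rewrite -h6 -(leq_add2r (\sum_(a <- L) (geo_mult A a - 1))) h1 addnC.
apply: (leq_trans h2); apply: (leq_trans h3); apply: (leq_trans h4).
by rewrite leq_add2r.
Qed.
End Main.

Section Final.
Variable C : numClosedFieldType.
Local Open Scope sesquilinear_scope.

Lemma herm_skewE n (A : 'M[C]_n) : A = herm_part A + skew_part A.
Proof.
rewrite /herm_part /skew_part -scalerDr addrACA subrr addr0 -mulr2n.
by rewrite -scaler_nat scalerA mulVf ?scale1r // pnatr_eq0.
Qed.

Lemma herm_normal n (A : 'M[C]_n) : herm_part A \is normalmx.
Proof.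
have hH : (herm_part A) ^t* = herm_part A.
  apply/matrixP => i j; rewrite !mxE /=.
  rewrite rmorphM rmorphD /= [X in _ + X]Num.Theory.conjCK fmorphV rmorph_nat.
  by rewrite addrC.
by apply/normalmxP; rewrite hH.
Qed.

Lemma skew_normal n (A : 'M[C]_n) : skew_part A \is normalmx.
Proof.
have hS : (skew_part A) ^t* = - skew_part A.
  apply/matrixP => i j; rewrite !mxE /=.
  rewrite rmorphM rmorphB /= [X in _ - X]Num.Theory.conjCK fmorphV rmorph_nat.
  by rewrite -mulrN opprB.
by apply/normalmxP; rewrite hS mulmxN mulNmx.
Qed.

Theorem main_gen n (A : 'M[C]_n) :
  (nspec A <=
     minn ((\rank (herm_part A)).+1 * nspec (skew_part A))
          ((\rank (skew_part A)).+1 * nspec (herm_part A))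
     - defectivity A)%N.
Proof.
have h1 := key (herm_skewE A) (skew_normal A).
have h2 : (nspec A + defectivity A <= (\rank (skew_part A)).+1 * nspec (herm_part A))%N.
  by apply: key (herm_normal A); rewrite addrC; apply: herm_skewE.
rewrite leq_subRL; last first.
  by rewrite leq_min (leq_trans _ h1) ?(leq_trans _ h2) ?leq_addl.
by rewrite addnC leq_min h1 h2.
Qed.
End Final.
Local Open Scope complex_scope.

Theorem corollary4p4 (R : realType) (n : nat) (A : 'M[R[i]]_n) :
  (nspec A <=
     minn ((\rank (herm_part A)).+1 * nspec (skew_part A))
          ((\rank (skew_part A)).+1 * nspec (herm_part A))
     - defectivity A)%N.
Proof. exact: main_gen. Qed.
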